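(* Let $S$ be a sample (a finite sequence of examples $z=(x,y)\in\mathcal X\times\{\pm1\}$), let $k>0$, and let $T\ge 2k\log|S|$. Let $p_1$ be the uniform distribution over the entries of $S$, and for $t=1,\dots,T$ let $h_t:\mathcal X\to\{\pm1\}$ be arbitrary hypotheses satisfying $\sum_{z=(x,y)\in S}p_t(z)1[h_t(x)\ne y]\le\frac{1}{5k}$ (i.e. $h_t$ is $\alpha$-weak for $p_t$ with $\alpha=\frac12-\frac1{5k}$), where $p_{t+1}(z)\propto p_t(z)\,2^{-1[h_t(x)=y]}$ for all $z\in S$ (Adaboost with parameter $\eta=\ln 2$). Then for every $z=(x,y)\in S$, $\frac1T\sum_{t=1}^T1[h_t(x)\ne y]\le\frac1k$.
   Context: $\log$ denotes the base-2 logarithm. The normalization in $p_{t+1}$ is over the entries of $S$ so that $p_{t+1}$ is a probability distribution. *)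

(* Defs.v *)
From HB Require Import structures.
From mathcomp Require Import all_boot all_order all_algebra.
From mathcomp Require Import all_classical all_reals exp.
Set Implicit Arguments. Unset Strict Implicit. Unset Printing Implicit Defensive.
Import Order.TTheory GRing.Theory Num.Theory.
Local Open Scope ring_scope.

Definition log2 {R : realType} (x : R) : R := ln x / ln 2.

(* 0/1 loss indicator 1[h(x) <> y]; labels {+-1} encoded as bool *)
Definition err {R : realType} {X : Type} (h : X -> bool) (z : X * bool) : R :=
  (h z.1 != z.2)%:R.

Definition ada_w {R : realType} {X : Type} (h : X -> bool) (z : X * bool) : R :=
  if h z.1 == z.2 then 2^-1 else 1.

(* Main.v *)
Require Import Defs.
From HB Require Import structures.
From mathcomp Require Import all_boot all_order all_algebra.
From mathcomp Require Import all_classical all_reals exp.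
From mathcomp Require Import ring lra.
Import Order.TTheory GRing.Theory Num.Theory.
Local Open Scope ring_scope.

Theorem lemma2 (R : realType) (X : Type) (n : nat) (S : 'I_n -> X * bool)
  (k : R) (T : nat) (h : nat -> X -> bool) (p : nat -> 'I_n -> R) :
  0 < k ->
  2 * k * log2 (n%:R : R) <= T%:R ->
  (forall i, p 1%N i = 1 / n%:R) ->
  (forall t, (1 <= t <= T)%N ->
     \sum_(i < n) p t i * err (h t) (S i) <= 1 / (5 * k)) ->
  (forall t, (1 <= t <= T)%N -> forall i,
     p t.+1 i = p t i * ada_w (h t) (S i) /
                \sum_(j < n) p t j * ada_w (h t) (S j)) ->
  forall i : 'I_n,
    1 / T%:R * \sum_(1 <= t < T.+1) err (h t) (S i) <= 1 / k.
Proof.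
move=> k0 hT hp1 hw hrec i.
have n0 : (0 < n)%N := leq_ltn_trans (leq0n i) (ltn_ord i).
have nR : (0 : R) < n%:R by rewrite ltr0n.
set eps := 1 / (5 * k).
set m := fun t => \sum_(1 <= s < t) err (h s) (S i) : R.
have err01 : forall t j, (0 : R) <= err (h t) (S j) /\ err (h t) (S j) <= (1 : R).
  by move=> t j; rewrite /err; case: (_ != _) => /=; split; lra.
have errE : forall t j, ada_w (h t) (S j) = 2^-1 + 2^-1 * err (h t) (S j) :> R.
  by move=> t j; rewrite /ada_w /err; case: eqP => _ /=; lra.
have ada0 : forall t j, 0 < ada_w (h t) (S j) :> R.
  by move=> t j; rewrite errE; have := err01 t j; lra.
have ln2V : ln (2^-1 : R) = - ln 2 by rewrite lnV // posrE.
have lnada : forall t, ln (ada_w (h t) (S i)) = - ln 2 * (1 - err (h t) (S i)) :> R.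
  by move=> t; rewrite /ada_w /err; case: eqP => _ /=; rewrite ?ln1 ?ln2V; lra.
have ln2ge : (1 / 2 : R) <= ln 2.
  have H := @le_ln1Dx R (- (1/2)) ltac:(lra).
  have E : (1 + - (1/2)) = (2^-1 : R) by lra.
  by rewrite E ln2V in H; lra.
have inv : forall d, (d <= T)%N -> (forall j, 0 < p d.+1 j) /\
    \sum_j p d.+1 j = 1 /\
    - ln n%:R + ln 2 * m d.+1 - d%:R * eps <= ln (p d.+1 i).
  elim=> [|d IH] hd.
    have m1 : m 1%N = 0 by rewrite /m big_geq.
    split; first by move=> j; rewrite hp1 divr_gt0.
    split.
      under eq_bigr do rewrite hp1.
      rewrite sumr_const card_ord -mulr_natr; field; lra.
    by rewrite hp1 m1 div1r lnV ?posrE //; lra.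
  have hd' : (d <= T)%N by apply: ltnW.
  move: IH => /(_ hd') [pos [s1 L]].
  set Z := \sum_j p d.+1 j * ada_w (h d.+1) (S j).
  set et := \sum_j p d.+1 j * err (h d.+1) (S j).
  have ZE : Z = 2^-1 * (1 + et).
    rewrite /Z (eq_bigr (fun j => 2^-1 * p d.+1 j + 2^-1 * (p d.+1 j * err (h d.+1) (S j)))).
      by rewrite big_split /= -!mulr_sumr s1 -/et mulrDr mulr1.
    by move=> j _; rewrite errE; ring.
  have et0 : 0 <= et.
    by apply: sumr_ge0 => j _; apply: mulr_ge0; [apply: ltW | case: (err01 d.+1 j)].
  have etle : et <= eps by apply: hw; rewrite hd.
  have Z0 : 0 < Z by rewrite ZE; lra.
  have hr := hrec d.+1 ltac:(by rewrite hd).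
  split; first by move=> j; rewrite hr divr_gt0 // mulr_gt0.
  split.
    under eq_bigr do rewrite hr; rewrite -mulr_suml -/Z divff //; lra.
  have lnZ : ln Z <= - ln 2 + eps.
    rewrite ZE lnM ?posrE; [|by rewrite invr_gt0|lra].
    rewrite ln2V; have := @le_ln1Dx R et ltac:(lra); lra.
  rewrite hr ln_div ?posrE ?mulr_gt0 // lnM ?posrE // lnada.
  rewrite /m big_nat_recr //= -/(m d.+1) -addn1 natrD.
  have := err01 d.+1 i; lra.
have [pos [s1 L]] := inv T (leqnn T).
have ple1 : p T.+1 i <= 1.
  rewrite -s1 (bigD1 i) //= lerDl; apply: sumr_ge0 => j _; exact: ltW (pos j).
have lnp : ln (p T.+1 i) <= 0 := ln_le0 ple1.
have l2 : (0 : R) < ln 2 by lra.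
rewrite /log2 mulrA ler_pdivrMr // in hT.
change (1 / T%:R * m T.+1 <= 1 / k).
have m0 : 0 <= m T.+1 by apply: sumr_ge0 => t _; case: (err01 t i).
have t0 : (0 : R) <= T%:R by [].
have keps : k * eps = 1/5 by rewrite /eps; field; lra.
have h1 : k * (ln 2 * m T.+1) <= k * ln n%:R + T%:R / 5.
  have : ln 2 * m T.+1 <= ln n%:R + T%:R * eps by lra.
  move=> H; have := ler_wpM2l (ltW k0) H.
  rewrite mulrDr (mulrCA k (T%:R) eps) keps; lra.
have h2 : (0 : R) <= T%:R * (ln 2 - 1/2) by rewrite mulr_ge0 // subr_ge0.
have h3 : ln 2 * (k * m T.+1 - T%:R) <= 0 by nra.
have h4 : k * m T.+1 <= T%:R.
  have : k * m T.+1 - T%:R <= 0.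
    by rewrite -(pmulr_rle0 _ l2).
  lra.
case: (posnP T) => [->|Tp]; first by rewrite invr0 mulr0 mul0r; apply: ltW; rewrite divr_gt0.
have TR : (0 : R) < T%:R by rewrite ltr0n.
rewrite !div1r ler_pdivrMl // ler_pdivlMr // mulrC.
lra.
Qed.
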